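(* Let $\mathcal{P}$ be a finite bias distribution and let $\ell'\ge2$, $0\le x'\le\ell'-1$ be integers. If the condition $E_p[f_{\ell,x}(p)]=0$ holds for any two of the three pairs $(\ell,x)=(\ell'-1,x')$, $(\ell',x')$, $(\ell',x'+1)$, then it also holds for the remaining pair.
   Context: A finite bias distribution is a probability distribution $\mathcal{P}$ supported on a finite subset of $(0,1)$ that is symmetric: it outputs $a$ and $1-a$ with the same probability. $E_p$ is expectation over $p\sim\mathcal{P}$. $\sigma(p)=\sqrt{(1-p)/p}$; for integers $\ell\ge1$, $0\le x\le\ell$, $f_{\ell,x}(p)=p^x(1-p)^{\ell-x}(x\sigma(p)-(\ell-x)\sigma(1-p))$. *)

(* Defs.v *)
From Stdlib Require Import Reals List.
Import ListNotations.
Open Scope R_scope.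

Record bias_dist := {
  supp : list R;
  mass : R -> R;
  supp_nodup : NoDup supp;
  supp_in01 : forall a, In a supp -> 0 < a < 1;
  mass_nonneg : forall a, In a supp -> 0 <= mass a;
  mass_sum1 : fold_right Rplus 0 (map mass supp) = 1;
  symmetric : forall a, In a supp -> In (1 - a) supp /\ mass (1 - a) = mass a
}.

Definition Ep (P : bias_dist) (g : R -> R) : R :=
  fold_right Rplus 0 (map (fun a => mass P a * g a) (supp P)).

Definition sigma (p : R) : R := sqrt ((1 - p) / p).

Definition fbias (l x : nat) (p : R) : R :=
  p ^ x * (1 - p) ^ (l - x) *
  (INR x * sigma p - INR (l - x) * sigma (1 - p)).

(* Main.v *)
Require Import Defs.
From Stdlib Require Import Reals Lra Lia List.
Open Scope R_scope.

Lemma sig_rel (p : R) : 0 < p < 1 -> p * Defs.sigma p = (1 - p) * Defs.sigma (1 - p).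
Proof.
  intros [h0 h1]. unfold Defs.sigma.
  replace (1 - (1 - p)) with p by ring.
  assert (H1 : 0 < (1 - p) / p) by (apply Rdiv_lt_0_compat; lra).
  assert (H2 : 0 < p / (1 - p)) by (apply Rdiv_lt_0_compat; lra).
  assert (Hs : sqrt ((1 - p) / p) * sqrt ((1 - p) / p) = (1 - p) / p) by (apply sqrt_sqrt; lra).
  assert (Ht : sqrt ((1 - p) / p) * sqrt (p / (1 - p)) = 1).
  { rewrite <- sqrt_mult by lra. replace ((1 - p) / p * (p / (1 - p))) with 1 by (field; lra).
    apply sqrt_1. }
  assert (Hpos : 0 < sqrt ((1 - p) / p)) by (apply sqrt_lt_R0; lra).
  set (s := sqrt ((1 - p) / p)) in *. set (t := sqrt (p / (1 - p))) in *.
  apply Rmult_eq_reg_l with s; [|lra].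
  replace (s * (p * s)) with (p * (s * s)) by ring.
  replace (s * ((1 - p) * t)) with ((1 - p) * (s * t)) by ring.
  rewrite Hs, Ht. field. lra.
Qed.

Lemma key (l x : nat) (p : R) : 0 < p < 1 -> (1 <= l)%nat -> (x <= l - 1)%nat ->
  fbias (l - 1) x p = fbias l x p + fbias l (x + 1) p.
Proof.
  intros hp hl hx. pose proof (sig_rel p hp) as Hr.
  destruct (Nat.le_exists_sub x (l - 1) hx) as [k [Hk _]].
  assert (E1 : (l - 1 - x = k)%nat) by lia.
  assert (E2 : (l - x = S k)%nat) by lia.
  assert (E3 : (l - (x + 1) = k)%nat) by lia.
  unfold fbias. rewrite E1, E2, E3.
  rewrite plus_INR, S_INR. simpl. rewrite pow_add. simpl.
  set (s := Defs.sigma p) in *. set (t := Defs.sigma (1 - p)) in *.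
  assert (Hps : p * s = (1 - p) * t) by exact Hr. clearbody s t.
  transitivity (p ^ x * (1 - p) ^ k * (INR x * s - INR k * t)
     + p ^ x * (1 - p) ^ k * (p * s - (1 - p) * t)).
  - rewrite Hps. ring.
  - ring.
Qed.

Lemma fold_split (L : list R) (m f g h : R -> R) :
  (forall a, In a L -> f a = g a + h a) ->
  fold_right Rplus 0 (map (fun a => m a * f a) L) =
  fold_right Rplus 0 (map (fun a => m a * g a) L) +
  fold_right Rplus 0 (map (fun a => m a * h a) L).
Proof.
  induction L as [|a L IH]; intros H; simpl; [ring|].
  rewrite IH by (intros; apply H; right; auto).
  rewrite (H a) by (left; auto). ring.
Qed.

Theorem lemma2 (P : bias_dist) (l' x' : nat) :
  (2 <= l')%nat -> (x' <= l' - 1)%nat ->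
  let A := Ep P (fbias (l' - 1)%nat x') = 0 in
  let B := Ep P (fbias l' x') = 0 in
  let C := Ep P (fbias l' (x' + 1)%nat) = 0 in
  (A /\ B -> C) /\ (A /\ C -> B) /\ (B /\ C -> A).
Proof.
  intros hl hx A B C.
  assert (E : Ep P (fbias (l' - 1)%nat x') = Ep P (fbias l' x') + Ep P (fbias l' (x' + 1)%nat)).
  { unfold Ep. apply fold_split. intros a Ha. apply key; [apply (supp_in01 P a Ha)|lia|lia]. }
  unfold A, B, C. rewrite E. lra.
Qed.
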